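(* If $x\mapsto p(x)r(x)$ is increasing on $(a,b)$, then $|w_\lambda(x)|\le 1$ for all $x\in(a,b)$ and all $\lambda\ge 0$.
   Context: Let $-\infty\le a<b\le\infty$ and let $p,r:(a,b)\to(0,\infty)$ be functions such that $p,p',r,r'$ are locally absolutely continuous on $(a,b)$. Write $\ell u=-\frac{1}{r}(p u')'$ and $u^{[1]}=p u'$. It is assumed that $\int_a^c\int_y^c \frac{dx}{p(x)}\,r(y)\,dy<\infty$ for some $c\in(a,b)$. For $\lambda\in\mathbb C$, $w_\lambda$ denotes the unique solution of $\ell w=\lambda w$ on $(a,b)$ with $\lim_{x\downarrow a}w(x)=1$ and $\lim_{x\downarrow a}w^{[1]}(x)=0$. *)

(* Defs.v *)
From Stdlib Require Import Reals Lra List.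
Open Scope R_scope.

(* Endpoints of the interval (a,b): [None] for a means -oo, [None] for b means +oo. *)
Definition in_I (a b : option R) (x : R) : Prop :=
  match a with Some a0 => a0 < x | None => True end /\
  match b with Some b0 => x < b0 | None => True end.

Definition ext_lt (a b : option R) : Prop :=
  match a, b with Some a0, Some b0 => a0 < b0 | _, _ => True end.

Fixpoint chain (c d : R) (l : list (R * R)) : Prop :=
  match l with
  | nil => True
  | (s, t) :: l' => c <= s /\ s <= t /\ t <= d /\ chain t d l'
  end.

Definition total_length (l : list (R * R)) : R :=
  fold_right (fun st acc => (snd st - fst st) + acc) 0 l.

Definition total_variation_on (f : R -> R) (l : list (R * R)) : R :=
  fold_right (fun st acc => Rabs (f (snd st) - f (fst st)) + acc) 0 l.

Definition AC_on (f : R -> R) (c d : R) : Prop :=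
  forall eps, 0 < eps -> exists delta, 0 < delta /\
    forall l, chain c d l -> total_length l < delta ->
      total_variation_on f l < eps.

Definition loc_AC (a b : option R) (f : R -> R) : Prop :=
  forall c d, in_I a b c -> in_I a b d -> c <= d -> AC_on f c d.

Definition loc_AC_with_loc_AC_deriv (a b : option R) (f : R -> R) : Prop :=
  loc_AC a b f /\
  exists df, (forall x, in_I a b x -> derivable_pt_lim f x (df x)) /\ loc_AC a b df.

Definition lim_at_left_end (a b : option R) (f : R -> R) (l : R) : Prop :=
  forall eps, 0 < eps ->
    match a with
    | Some a0 => exists delta, 0 < delta /\
        forall x, in_I a b x -> x < a0 + delta -> Rabs (f x - l) < eps
    | None => exists M, forall x, in_I a b x -> x < M -> Rabs (f x - l) < eps
    end.

Definition is_RInt (f : R -> R) (s t v : R) : Prop :=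
  exists pr : Riemann_integrable f s t, RiemannInt pr = v.

(* int_a^c int_y^c dx/p(x) r(y) dy < oo for some c in (a,b)
   (nonnegative integrand: the improper integral at a is finite iff the
   integrals over [t,c] are bounded as t decreases to a) *)
Definition integrability_condition (a b : option R) (p r : R -> R) : Prop :=
  exists c M, in_I a b c /\
    forall t, in_I a b t -> t <= c ->
      exists g : R -> R,
        (forall y, t <= y <= c -> is_RInt (fun x => / p x) y c (g y)) /\
        exists v, is_RInt (fun y => g y * r y) t c v /\ v <= M.

Definition is_w_lambda (a b : option R) (p r : R -> R) (lam : R) (w : R -> R) : Prop :=
  exists dw dpw : R -> R,
    (forall x, in_I a b x -> derivable_pt_lim w x (dw x)) /\
    (forall x, in_I a b x -> derivable_pt_lim (fun y => p y * dw y) x (dpw x)) /\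
    (forall x, in_I a b x -> - (/ r x) * dpw x = lam * w x) /\
    lim_at_left_end a b w 1 /\
    lim_at_left_end a b (fun y => p y * dw y) 0.

(* Main.v *)
Require Import Defs.
From Stdlib Require Import Reals Lra Psatz Classical.
Open Scope R_scope.

Lemma inI_conv a b x y c : in_I a b x -> in_I a b y -> x <= c <= y -> in_I a b c.
Proof. destruct a, b; unfold in_I; simpl; intros; lra. Qed.

Lemma inI_below a b s : in_I a b s -> exists y, in_I a b y /\ y < s.
Proof.
  destruct a as [a0|]; intros H.
  - exists ((a0 + s)/2). destruct b; unfold in_I in *; simpl in *; split; lra.
  - exists (s - 1). destruct b; unfold in_I in *; simpl in *; split; lra.
Qed.

Lemma inI_above a b s : in_I a b s -> exists y, in_I a b y /\ s < y.
Proof.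
  destruct b as [b0|]; intros H.
  - exists ((b0 + s)/2). destruct a; unfold in_I in *; simpl in *; split; lra.
  - exists (s + 1). destruct a; unfold in_I in *; simpl in *; split; lra.
Qed.

Definition Lim' a b f l := forall eps, 0 < eps -> exists s, in_I a b s /\
  forall t, in_I a b t -> t < s -> Rabs (f t - l) < eps.

Lemma lim_Lim' a b f l x0 : in_I a b x0 -> lim_at_left_end a b f l -> Lim' a b f l.
Proof.
  intros Hx H eps He. specialize (H eps He). destruct a as [a0|].
  - destruct H as [d [Hd H]]. exists (Rmin x0 (a0 + d/2)).
    split.
    + unfold Rmin; destruct Rle_dec; auto. destruct b; unfold in_I in *; simpl in *; split; lra.
    + intros t Ht Hts. apply H; auto. pose proof (Rmin_r x0 (a0 + d/2)). lra.
  - destruct H as [M H]. exists (Rmin x0 (M - 1)). split.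
    + unfold Rmin; destruct Rle_dec; auto. destruct b; unfold in_I in *; simpl in *; split; try lra; auto.
    + intros t Ht Hts. apply H; auto. pose proof (Rmin_r x0 (M-1)). lra.
Qed.

Lemma Lim'_lin a b f g l m c : Lim' a b f l -> Lim' a b g m ->
  Lim' a b (fun y => c * f y + g y) (c * l + m).
Proof.
  intros Hf Hg eps He.
  destruct (Hf (eps / 2 / (Rabs c + 1))) as [s1 [Hs1 H1]].
  { apply Rdiv_lt_0_compat; [lra|]. pose proof (Rabs_pos c); lra. }
  destruct (Hg (eps/2)) as [s2 [Hs2 H2]]; [lra|].
  exists (Rmin s1 s2). split.
  { unfold Rmin; destruct Rle_dec; auto. }
  intros t Ht Hts. pose proof (Rmin_l s1 s2). pose proof (Rmin_r s1 s2).
  specialize (H1 t Ht ltac:(lra)). specialize (H2 t Ht ltac:(lra)).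
  replace (c * f t + g t - (c * l + m)) with (c * (f t - l) + (g t - m)) by ring.
  eapply Rle_lt_trans; [apply Rabs_triang|]. rewrite Rabs_mult.
  assert (Rabs c * Rabs (f t - l) <= eps/2).
  { pose proof (Rabs_pos c). pose proof (Rabs_pos (f t - l)).
    assert (Rabs (f t - l) * (Rabs c + 1) < eps/2).
    { apply (Rmult_lt_compat_r (Rabs c + 1)) in H1; [|lra].
      unfold Rdiv in H1. rewrite Rmult_assoc, Rinv_l in H1; lra. }
    nra. }
  lra.
Qed.

Lemma Lim'_ge a b f l t : in_I a b t -> Lim' a b f l ->
  (forall y, in_I a b y -> y < t -> f y <= f t) -> l <= f t.
Proof.
  intros Ht Hl Hm. destruct (Rle_dec l (f t)) as [|Hn]; auto. exfalso.
  destruct (Hl (l - f t)) as [s [Hs H]]; [lra|].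
  destruct (inI_below a b (Rmin s t)) as [y [Hy Hys]].
  { unfold Rmin; destruct Rle_dec; auto. }
  pose proof (Rmin_l s t). pose proof (Rmin_r s t).
  specialize (H y Hy ltac:(lra)). specialize (Hm y Hy ltac:(lra)).
  apply Rabs_def2 in H. lra.
Qed.

Lemma Lim'_le a b f l t : in_I a b t -> Lim' a b f l ->
  (forall y, in_I a b y -> y < t -> f t <= f y) -> f t <= l.
Proof.
  intros Ht Hl Hm. destruct (Rle_dec (f t) l) as [|Hn]; auto. exfalso.
  destruct (Hl (f t - l)) as [s [Hs H]]; [lra|].
  destruct (inI_below a b (Rmin s t)) as [y [Hy Hys]].
  { unfold Rmin; destruct Rle_dec; auto. }
  pose proof (Rmin_l s t). pose proof (Rmin_r s t).
  specialize (H y Hy ltac:(lra)). specialize (Hm y Hy ltac:(lra)).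
  apply Rabs_def2 in H. lra.
Qed.

Lemma mono_up (P : R -> Prop) f df :
  (forall x y c, P x -> P y -> x <= c <= y -> P c) ->
  (forall c, P c -> derivable_pt_lim f c (df c)) ->
  (forall c, P c -> 0 <= df c) ->
  forall x y, P x -> P y -> x <= y -> f x <= f y.
Proof.
  intros Hc Hd Hs x y Hx Hy Hxy. destruct (Req_dec x y) as [->|Hne]; [lra|].
  destruct (MVT_cor2 f df x y) as [c [Heq Hc']]; [lra| |].
  - intros c Hc'. apply Hd. apply (Hc x y c Hx Hy Hc').
  - assert (P c) by (eapply Hc; [exact Hx|exact Hy|lra]).
    specialize (Hs c H). nra.
Qed.

Lemma mono_down (P : R -> Prop) f df :
  (forall x y c, P x -> P y -> x <= c <= y -> P c) ->
  (forall c, P c -> derivable_pt_lim f c (df c)) ->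
  (forall c, P c -> df c <= 0) ->
  forall x y, P x -> P y -> x <= y -> f y <= f x.
Proof.
  intros Hc Hd Hs x y Hx Hy Hxy. destruct (Req_dec x y) as [->|Hne]; [lra|].
  destruct (MVT_cor2 f df x y) as [c [Heq Hc']]; [lra| |].
  - intros c Hc'. apply Hd. apply (Hc x y c Hx Hy Hc').
  - assert (P c) by (eapply Hc; [exact Hx|exact Hy|lra]).
    specialize (Hs c H). nra.
Qed.

Lemma deriv_nonneg a b f x l : in_I a b x -> derivable_pt_lim f x l ->
  (forall u v, in_I a b u -> in_I a b v -> u <= v -> f u <= f v) -> 0 <= l.
Proof.
  intros Hx Hd Hm. destruct (Rle_dec 0 l) as [|Hn]; auto. exfalso.
  destruct (Hd (- l)) as [d Hdd]; [lra|].
  destruct (inI_above a b x Hx) as [z [Hz Hxz]].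
  set (h := Rmin (d/2) (z - x)).
  assert (Hh : 0 < h). { unfold h, Rmin; destruct Rle_dec; pose proof (cond_pos d); lra. }
  assert (Hhz : h <= z - x) by apply Rmin_r.
  assert (Hhd : h <= d/2) by apply Rmin_l.
  specialize (Hdd h ltac:(lra)). rewrite Rabs_right in Hdd by lra.
  pose proof (cond_pos d).
  specialize (Hdd ltac:(lra)).
  assert (0 <= (f (x + h) - f x) / h).
  { apply Rmult_le_pos; [|left; apply Rinv_0_lt_compat; lra].
    assert (f x <= f (x+h)); [apply Hm; auto; [eapply inI_conv; [exact Hx|exact Hz|lra]|lra]|lra]. }
  apply Rabs_def2 in Hdd. lra.
Qed.

Theorem mainTheorem2 :
  forall (a b : option R) (p r : R -> R),
    ext_lt a b ->
    (forall x, in_I a b x -> 0 < p x /\ 0 < r x) ->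
    loc_AC_with_loc_AC_deriv a b p ->
    loc_AC_with_loc_AC_deriv a b r ->
    integrability_condition a b p r ->
    (forall x y, in_I a b x -> in_I a b y -> x <= y -> p x * r x <= p y * r y) ->
    forall (lam : R) (w : R -> R),
      0 <= lam ->
      is_w_lambda a b p r lam w ->
      forall x, in_I a b x -> Rabs (w x) <= 1.
Proof.
  intros a b p r Hab Hpos Hp Hr Hint Hmon lam w Hlam Hw x Hx.
  destruct Hp as [_ [dp [Hdp _]]]. destruct Hr as [_ [dr [Hdr _]]].
  destruct Hw as [dw [dpw [Hdw [Hdpw [Heq [Hw1 Hu0]]]]]].
  assert (Hdpw' : forall y, in_I a b y -> dpw y = - lam * r y * w y).
  { intros y Hy. destruct (Hpos y Hy) as [Hpy Hry].
    assert (dpw y = -(r y) * (-(/ r y) * dpw y)) by (field; lra).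
    rewrite H, Heq by auto. ring. }
  set (u := fun y => p y * dw y) in *.
  assert (Hdwu : forall y, in_I a b y -> dw y = u y / p y).
  { intros y Hy. destruct (Hpos y Hy). unfold u. field; lra. }
  pose proof (lim_Lim' _ _ _ _ _ Hx Hw1) as Lw.
  pose proof (lim_Lim' _ _ _ _ _ Hx Hu0) as Lu.
  assert (convI : forall x y c, in_I a b x -> in_I a b y -> x <= c <= y -> in_I a b c)
    by (intros x1 y1 c1 H1 H2 H3; exact (inI_conv a b x1 y1 c1 H1 H2 H3)).
  destruct (Req_dec lam 0) as [Hl0|Hl0].
  -
    assert (Hd0 : forall y, in_I a b y -> dpw y = 0) by (intros; rewrite Hdpw'; auto; rewrite Hl0; ring).
    assert (Hu : forall t, in_I a b t -> u t = 0).
    { intros t Ht. apply Rle_antisym.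
      - apply (Lim'_le a b u 0 t Ht Lu). intros y Hy Hyt.
        apply (mono_down (in_I a b) u dpw convI Hdpw); auto; try lra.
        intros; rewrite Hd0; auto; lra.
      - apply (Lim'_ge a b u 0 t Ht Lu). intros y Hy Hyt.
        apply (mono_up (in_I a b) u dpw convI Hdpw); auto; try lra.
        intros; rewrite Hd0; auto; lra. }
    assert (Hdw0 : forall y, in_I a b y -> dw y = 0).
    { intros y Hy. rewrite Hdwu, Hu by auto. unfold Rdiv; ring. }
    assert (w x = 1).
    { apply Rle_antisym.
      - apply (Lim'_le a b w 1 x Hx Lw). intros y Hy Hyt.
        apply (mono_down (in_I a b) w dw convI Hdw); auto; try lra.
        intros; rewrite Hdw0; auto; lra.
      - apply (Lim'_ge a b w 1 x Hx Lw). intros y Hy Hyt.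
        apply (mono_up (in_I a b) w dw convI Hdw); auto; try lra.
        intros; rewrite Hdw0; auto; lra. }
    rewrite H, Rabs_R1. lra.
  - assert (Hlp : 0 < lam) by lra.
    destruct (Lw (1/2)) as [s0 [Hs0 Hs0w]]; [lra|].
    set (s := Rmin s0 x).
    assert (Hs : in_I a b s) by (unfold s, Rmin; destruct Rle_dec; auto).
    assert (Hsx : s <= x) by apply Rmin_r.
    assert (Hss0 : s <= s0) by apply Rmin_l.
    set (P := fun c => in_I a b c /\ c < s).
    assert (convP : forall x y c, P x -> P y -> x <= c <= y -> P c).
    { intros x1 y1 c [H1 H1'] [H2 H2'] Hc. split; [exact (inI_conv a b x1 y1 c H1 H2 ltac:(lra))|lra]. }
    assert (Hwpos : forall t, P t -> 1/2 < w t).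
    { intros t [Ht Hts]. specialize (Hs0w t Ht ltac:(lra)). apply Rabs_def2 in Hs0w. lra. }
    assert (Hule : forall t, P t -> u t <= 0).
    { intros t Pt. destruct Pt as [Ht Hts].
      apply (Lim'_le a b u 0 t Ht Lu). intros y Hy Hyt.
      apply (mono_down P u dpw convP); try (split; auto; lra); try lra.
      - intros c [Hc _]; auto.
      - intros c Pc. destruct Pc as [Hc Hcs]. rewrite Hdpw' by auto.
        pose proof (Hwpos c (conj Hc Hcs)). destruct (Hpos c Hc). assert (0 < r c * w c) by nra. nra. }
    assert (Hwle : forall t, P t -> w t <= 1).
    { intros t Pt. destruct Pt as [Ht Hts].
      apply (Lim'_le a b w 1 t Ht Lw). intros y Hy Hyt.
      apply (mono_down P w dw convP); try (split; auto; lra); try lra.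
      - intros c [Hc _]; auto.
      - intros c Pc. destruct Pc as [Hc Hcs]. rewrite Hdwu by auto.
        pose proof (Hule c (conj Hc Hcs)). destruct (Hpos c Hc).
        unfold Rdiv. pose proof (Rinv_0_lt_compat _ H0). nra. }
    set (q := fun y => p y * r y).
    assert (Hdq : forall y, in_I a b y -> derivable_pt_lim q y (dp y * r y + p y * dr y)).
    { intros y Hy. exact (derivable_pt_lim_mult p r y _ _ (Hdp y Hy) (Hdr y Hy)). }
    assert (Hdq0 : forall y, in_I a b y -> 0 <= dp y * r y + p y * dr y).
    { intros y Hy. apply (deriv_nonneg a b q y _ Hy (Hdq y Hy)). intros; apply Hmon; auto. }
    assert (Claim : forall eps, 0 < eps -> exists t, P t /\ u t * u t / q t <= eps).
    { intros eps He. apply NNPP. intros Hn.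
      assert (Hbig : forall t, P t -> eps * q t < u t * u t).
      { intros t Pt. destruct (Rlt_dec (eps * q t) (u t * u t)) as [|Hc]; auto.
        exfalso. apply Hn. exists t. split; auto. destruct Pt as [Ht _].
        destruct (Hpos t Ht). assert (0 < q t) by (unfold q; nra).
        apply Rmult_le_reg_r with (q t); auto. unfold Rdiv. rewrite Rmult_assoc, Rinv_l by lra. lra. }
      destruct (Lw (eps / lam)) as [s1 [Hs1 Hs1w]]; [apply Rdiv_lt_0_compat; lra|].
      destruct (inI_below a b (Rmin s1 s)) as [t [Ht Hts]].
      { unfold Rmin; destruct Rle_dec; auto. }
      pose proof (Rmin_l s1 s). pose proof (Rmin_r s1 s).
      assert (Pt : P t) by (split; auto; lra).
      specialize (Hs1w t Ht ltac:(lra)).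
      set (c := lam / sqrt eps * sqrt (q t)).
      assert (HS : 0 < sqrt eps) by (apply sqrt_lt_R0; auto).
      destruct (Hpos t Ht) as [Hpt Hrt].
      assert (Hqt : 0 < q t) by (unfold q; nra).
      assert (Hc0 : 0 <= c).
      { unfold c. apply Rmult_le_pos; [|apply sqrt_pos]. left; apply Rdiv_lt_0_compat; auto. }
      set (phi := fun y => (- c) * w y + u y).
      assert (Lphi : Lim' a b phi (- c * 1 + 0)) by (apply Lim'_lin; auto).
      set (Pt' := fun y => in_I a b y /\ y <= t).
      assert (convPt : forall x y z, Pt' x -> Pt' y -> x <= z <= y -> Pt' z).
      { intros x1 y1 z [H1 H1'] [H2 H2'] Hz. split; [exact (inI_conv a b x1 y1 z H1 H2 ltac:(lra))|lra]. }
      assert (Hphi : forall y, Pt' y -> derivable_pt_lim phi y (-c * dw y + dpw y)).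
      { intros y [Hy _]. exact (derivable_pt_lim_plus _ _ y _ _
          (derivable_pt_lim_scal w (-c) y _ (Hdw y Hy)) (Hdpw y Hy)). }
      assert (Hphi0 : forall y, Pt' y -> 0 <= -c * dw y + dpw y).
      { intros y [Hy Hyt]. assert (Py : P y) by (split; auto; lra).
        rewrite Hdwu, Hdpw' by auto.
        destruct (Hpos y Hy) as [Hpy Hry].
        pose proof (Hbig y Py) as Hb. pose proof (Hule y Py) as Hu'.
        pose proof (Hwle y Py). pose proof (Hwpos y Py).
        set (A := sqrt (q t)). set (B := sqrt (q y)).
        assert (HqyB : B * B = p y * r y) by (unfold B; rewrite sqrt_sqrt; unfold q; nra).
        assert (HB0 : 0 <= B) by apply sqrt_pos.
        assert (HAB : B <= A) by (apply sqrt_le_1_alt; unfold q; apply Hmon; auto).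
        assert (HU : sqrt eps * B <= - u y).
        { unfold B. rewrite <- sqrt_mult by (try lra; unfold q; nra).
          rewrite <- (sqrt_Rsqr (- u y)) by lra. apply sqrt_le_1_alt.
          unfold Rsqr. nra. }
        assert (K1 : lam * A * B <= c * (- u y)).
        { unfold c. fold A. unfold Rdiv.
          replace (lam * / sqrt eps * A * - u y) with (lam * A * / sqrt eps * (- u y)) by ring.
          assert (EqK : lam * A * B = lam * A * / sqrt eps * (sqrt eps * B)) by (field; lra).
          rewrite EqK. apply Rmult_le_compat_l; auto.
          apply Rmult_le_pos; [|left; apply Rinv_0_lt_compat; auto].
          apply Rmult_le_pos; [lra|apply sqrt_pos]. }
        assert (K2 : lam * (p y * r y) <= c * (- u y)).
        { rewrite <- HqyB. assert (0 <= lam * B) by nra. nra. }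
        assert (K3 : lam * r y <= c * (- u y) / p y).
        { apply Rmult_le_reg_r with (p y); auto.
          replace (c * - u y / p y * p y) with (c * - u y) by (field; lra). lra. }
        assert (K4 : - c * (u y / p y) = c * (- u y) / p y) by (field; lra).
        rewrite K4. assert (0 < lam * r y) by nra. nra. }
      assert (Hge : - c * 1 + 0 <= phi t).
      { apply (Lim'_ge a b phi _ t Ht Lphi). intros y Hy Hyt.
        apply (mono_up Pt' phi _ convPt Hphi Hphi0); try (split; auto; lra); lra. }
      unfold phi in Hge.
      pose proof (Hule t Pt). pose proof (Hwle t Pt).
      assert (Hut : - u t <= c * (1 - w t)) by lra.
      assert (Hsq : u t * u t <= c * c * ((1 - w t) * (1 - w t))) by nra.
      assert (Hcc : c * c = lam * lam / eps * q t).
      { unfold c. replace (lam / sqrt eps * sqrt (q t) * (lam / sqrt eps * sqrt (q t)))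
          with (lam * lam / (sqrt eps * sqrt eps) * (sqrt (q t) * sqrt (q t))) by (field; lra).
        rewrite !sqrt_sqrt; lra. }
      pose proof (Hbig t Pt) as Hb.
      rewrite Hcc in Hsq.
      assert (Hk : eps * eps < lam * lam * ((1 - w t) * (1 - w t))).
      { assert (M1 : eps * q t < lam * lam / eps * q t * ((1 - w t) * (1 - w t))) by lra.
        assert (M2 : eps < lam * lam / eps * ((1 - w t) * (1 - w t))).
        { apply Rmult_lt_reg_r with (q t); auto. nra. }
        apply Rmult_lt_compat_l with (r := eps) in M2; auto.
        replace (eps * (lam * lam / eps * ((1 - w t) * (1 - w t))))
          with (lam * lam * ((1 - w t) * (1 - w t))) in M2 by (field; lra). lra. }
      apply Rabs_def2 in Hs1w.
      assert (lam * (1 - w t) < eps).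
      { destruct Hs1w as [_ Hs1w].
        assert (M3 : 1 - w t < eps / lam) by lra.
        apply Rmult_lt_compat_l with (r := lam) in M3; auto.
        replace (lam * (eps / lam)) with eps in M3 by (field; lra). lra. }
      assert (M4 : 0 <= lam * (1 - w t)) by nra. nra. }
    set (E := fun y => lam * (w y * w y) + u y * u y / q y).
    assert (HE : forall y, in_I a b y -> derivable_pt_lim E y
       (lam * (dw y * w y + w y * dw y) +
        ((dpw y * u y + u y * dpw y) * q y - (dp y * r y + p y * dr y) * (u y * u y)) / (q y)²)).
    { intros y Hy. destruct (Hpos y Hy).
      exact (derivable_pt_lim_plus _ _ y _ _
        (derivable_pt_lim_scal _ lam y _ (derivable_pt_lim_mult w w y _ _ (Hdw y Hy) (Hdw y Hy)))
        (derivable_pt_lim_div _ q y _ _ (derivable_pt_lim_mult u u y _ _ (Hdpw y Hy) (Hdpw y Hy))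
           (Hdq y Hy) ltac:(unfold q; nra))). }
    assert (HE0 : forall y, in_I a b y ->
       lam * (dw y * w y + w y * dw y) +
        ((dpw y * u y + u y * dpw y) * q y - (dp y * r y + p y * dr y) * (u y * u y)) / (q y)² <= 0).
    { intros y Hy. destruct (Hpos y Hy).
      assert (Hq : 0 < q y) by (unfold q; nra).
      rewrite Hdpw' by auto. rewrite (Hdwu y Hy).
      replace (lam * (u y / p y * w y + w y * (u y / p y)) +
        ((- lam * r y * w y * u y + u y * (- lam * r y * w y)) * q y -
         (dp y * r y + p y * dr y) * (u y * u y)) / (q y)²)
       with (- ((dp y * r y + p y * dr y) * (u y * u y)) / (q y)²)
       by (unfold q, Rsqr; field; lra).
      unfold Rdiv. pose proof (Hdq0 y Hy).
      assert (0 < / (q y)²) by (apply Rinv_0_lt_compat; apply Rmult_lt_0_compat; exact Hq). assert (0 <= (dp y * r y + p y * dr y) * (u y * u y)) by (apply Rmult_le_pos; nra). nra. }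
    assert (Hbound : forall eps, 0 < eps -> lam * (w x * w x) <= lam + eps).
    { intros eps He. destruct (Claim eps He) as [t [Pt Ht]].
      destruct Pt as [Hti Hts].
      assert (HEt : E x <= E t).
      { apply (mono_down (in_I a b) E _ convI HE HE0); auto; lra. }
      pose proof (Hwpos t (conj Hti Hts)). pose proof (Hwle t (conj Hti Hts)).
      destruct (Hpos x Hx).
      assert (0 <= u x * u x / q x).
      { unfold Rdiv. apply Rmult_le_pos; [nra|left; apply Rinv_0_lt_compat; unfold q; nra]. }
      unfold E in HEt. assert (w t * w t <= 1) by nra. assert (lam * (w t * w t) <= lam) by nra. lra. }
    assert (Hw2 : w x * w x <= 1).
    { destruct (Rle_dec (w x * w x) 1) as [|Hn]; auto.
      exfalso. specialize (Hbound ((lam * (w x * w x) - lam) / 2)). nra. }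
    destruct (Rcase_abs (w x)); [rewrite Rabs_left|rewrite Rabs_right]; try nra.
Qed.
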